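(* Let $q(x)=x^g+a_{g-1}x^{g-1}+\cdots+a_1x+a_0\in\mathbb{Z}[x]$ be irreducible over $\mathbb{Z}$, and suppose $|a_{g-1}|>2g$. Then $\mathrm{sym}(q)(x)=x^g\,q\!\left(x+\frac1x\right)$ satisfies the homological criterion, i.e. it is symplectically irreducible, is not a cyclotomic polynomial, and is not a polynomial in $x^k$ for any $k>1$.
   Context: A symplectic polynomial is an even-degree integer polynomial that is monic and palindromic (equivalently, the characteristic polynomial of an element of $\mathrm{Sp}(2n,\mathbb{Z})$). A symplectic polynomial is symplectically irreducible if it is not a product of two nontrivial symplectic polynomials. A cyclotomic polynomial is the minimal polynomial over $\mathbb{Q}$ of a primitive $n$-th root of unity. *)

(* Defs.v *)
From HB Require Import structures.
From mathcomp Require Import all_boot all_order all_algebra all_field.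
Set Implicit Arguments. Unset Strict Implicit. Unset Printing Implicit Defensive.
Import GRing.Theory Num.Theory.
Local Open Scope ring_scope.

Definition symplectic (p : {poly int}) : Prop :=
  [/\ p \is monic, ~~ odd (size p).-1 &
      forall i : nat, (i <= (size p).-1)%N -> p`_i = p`_((size p).-1 - i)].

Definition symp_irreducible (p : {poly int}) : Prop :=
  symplectic p /\
  forall f h : {poly int}, symplectic f -> symplectic h -> p = f * h ->
    size f = 1%N \/ size h = 1%N.

Definition is_cyclotomic (p : {poly int}) : Prop :=
  exists2 n : nat, (0 < n)%N & p = 'Phi_n.

Definition poly_in_Xk (p : {poly int}) (k : nat) : Prop :=
  exists r : {poly int}, p = r \Po 'X^k.

(* sym(q)(x) = x^g q(x + 1/x), with g = deg q, written out as
   sum_i q_i (x^2+1)^i x^(g-i). *)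
Definition sym (q : {poly int}) : {poly int} :=
  \sum_(i < size q) q`_i *: (('X^2 + 1) ^+ i * 'X^((size q).-1 - i)).

Definition homological_criterion (p : {poly int}) : Prop :=
  [/\ symp_irreducible p, ~ is_cyclotomic p &
      forall k : nat, (1 < k)%N -> ~ poly_in_Xk p k].

(* Main.v *)
Require Import Defs.
From HB Require Import structures.
From mathcomp Require Import all_boot all_order all_algebra all_field.
From mathcomp Require Import zify ring.
Import Order.TTheory GRing.Theory Num.Theory.
Local Open Scope ring_scope.

Definition TT : {poly int} := 'X^2 + 1.
Definition S (c : nat) (r : {poly int}) : {poly int} :=
  \sum_(i < c.+1) r`_i *: (('X^2 + 1) ^+ i * 'X^(c - i)).
Definition pal (c : nat) (p : {poly int}) : Prop :=
  (size p <= (2 * c).+1)%N /\ forall i j, (i + j = 2 * c)%N -> p`_i = p`_j.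

Lemma coef_big (p : {poly int}) n j : (size p <= n)%N -> (n <= j)%N -> p`_j = 0.
Proof. move=> h1 h2; apply: nth_default; exact: leq_trans h1 h2. Qed.
Arguments coef_big {p n j}.

Lemma pal_add c p q : pal c p -> pal c q -> pal c (p + q).
Proof.
move=> [s1 h1] [s2 h2]; split.
  by apply: leq_trans (size_polyD _ _) _; rewrite geq_max s1 s2.
by move=> i j e; rewrite !coefD (h1 _ _ e) (h2 _ _ e).
Qed.

Lemma pal_scale c a p : pal c p -> pal c (a *: p).
Proof.
move=> [s1 h1]; split; first exact: leq_trans (size_scale_leq _ _) s1.
by move=> i j e; rewrite !coefZ (h1 _ _ e).
Qed.

Lemma pal_X c p : pal c p -> pal c.+1 ('X * p).
Proof.
move=> [s1 h1]; split.
  apply: leq_trans (size_polyMleq _ _) _; rewrite size_polyX; lia.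
move=> i j e; rewrite !coefXM.
case: i e => [|i] e; case: j e => [|j] e //=.
- by rewrite (coef_big s1) //; lia.
- by rewrite (coef_big s1) //; lia.
- by apply: h1; lia.
Qed.

Lemma pal_T c p : pal c p -> pal c.+1 (('X^2 + 1) * p).
Proof.
move=> [s1 h1]; rewrite mulrDl mul1r; split.
  apply: leq_trans (size_polyD _ _) _; rewrite geq_max; apply/andP; split; last lia.
  apply: leq_trans (size_polyMleq _ _) _; rewrite size_polyXn; lia.
move=> i j e; rewrite !coefD !coefXnM.
case: ltnP => hi; case: ltnP => hj.
- have -> : i = j by lia. by [].
- rewrite add0r (coef_big s1 (j:=j)) ?addr0; last lia. by apply: h1; lia.
- rewrite add0r (coef_big s1 (j:=i)) ?addr0; last lia. by apply: h1; lia.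
- rewrite (h1 (i - 2)%N j) ?(h1 i (j - 2)%N) 1?addrC //; lia.
Qed.

Lemma pal_Tn n : pal n (('X^2 + 1) ^+ n).
Proof.
elim: n => [|n IH]; last by rewrite exprS; apply: pal_T.
rewrite expr0; split; first by rewrite size_poly1.
by move=> i j e; have [-> ->] : i = 0%N /\ j = 0%N by lia.
Qed.

Lemma Tn_top n : (('X^2 + 1 : {poly int}) ^+ n)`_(2 * n) = 1.
Proof.
elim: n => [|n IH]; first by rewrite expr0 coef1.
rewrite exprS mulrDl mul1r coefD coefXnM.
have [s _] := pal_Tn n.
rewrite ifF; last lia.
rewrite (coef_big s (j := (2 * n.+1)%N)); last lia.
by rewrite addr0 -IH; congr (_`_ _); lia.
Qed.

Lemma Tn_bot n : (('X^2 + 1 : {poly int}) ^+ n)`_0 = 1.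
Proof. have [_ h] := pal_Tn n. rewrite (h 0%N (2 * n)%N) //; exact: Tn_top. Qed.

Lemma Tn_one n : (('X^2 + 1 : {poly int}) ^+ n)`_1 = 0.
Proof.
elim: n => [|n IH]; first by rewrite expr0 coef1.
by rewrite exprS mulrDl mul1r coefD coefXnM /= IH add0r.
Qed.

Lemma S_rec c r : S c.+1 r = 'X * S c r + r`_c.+1 *: ('X^2 + 1) ^+ c.+1.
Proof.
rewrite /S big_ord_recr /= subnn expr0 mulr1; congr (_ + _).
rewrite mulr_sumr; apply: eq_bigr => i _.
rewrite -scalerAr; congr (_ *: _).
rewrite subSn ?exprS; last by rewrite -ltnS.
by rewrite mulrCA.
Qed.

Lemma S_0 r : S 0 r = (r`_0)%:P.
Proof. by rewrite /S big_ord1 expr0 mulr1 -alg_polyC. Qed.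

Lemma pal_S c r : pal c (S c r).
Proof.
elim: c => [|c IH].
  rewrite S_0; split; first by rewrite size_polyC; case: (_ != _).
  by move=> i j e; have [-> ->] : i = 0%N /\ j = 0%N by lia.
rewrite S_rec; apply: pal_add; first exact: pal_X.
exact/pal_scale/pal_Tn.
Qed.

Lemma S_top c r : (S c r)`_(2 * c) = r`_c.
Proof.
elim: c => [|c IH]; first by rewrite S_0 coefC.
rewrite S_rec coefD coefXM.
have -> : (2 * c.+1 == 0)%N = false by lia.
have [s _] := pal_S c r.
rewrite (coef_big s); last lia.
by rewrite coefZ Tn_top mulr1 add0r.
Qed.

Lemma S_bot c r : (S c r)`_0 = r`_c.
Proof. have [_ h] := pal_S c r. rewrite (h 0%N (2 * c)%N) //; exact: S_top. Qed.

Lemma S_add c p q : S c (p + q) = S c p + S c q.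
Proof. by rewrite /S -big_split; apply: eq_bigr => i _; rewrite coefD scalerDl. Qed.

Lemma S_opp c p : S c (- p) = - S c p.
Proof. by rewrite /S -sumrN; apply: eq_bigr => i _; rewrite coefN scaleNr. Qed.

Lemma S_scale c a p : S c (a *: p) = a *: S c p.
Proof. by rewrite /S scaler_sumr; apply: eq_bigr => i _; rewrite coefZ scalerA. Qed.

Lemma S_zero c : S c 0 = 0.
Proof. by rewrite /S big1 // => i _; rewrite coef0 scale0r. Qed.

Lemma S_inj c d : S c d = 0 -> forall i, (i <= c)%N -> d`_i = 0.
Proof.
elim: c => [|c IH] h i hi.
  have := congr1 (fun p : {poly int} => p`_0) h; rewrite S_0 coefC coef0 /=.
  by have -> : i = 0%N by lia.
have h0 : d`_c.+1 = 0.
  have := congr1 (fun p : {poly int} => p`_0) h; rewrite S_rec.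
  by rewrite coefD coefXM /= add0r coefZ Tn_bot mulr1 coef0.
move: h; rewrite S_rec h0 scale0r addr0 => /eqP; rewrite mulf_eq0 polyX_eq0 /= => /eqP h.
case: (ltnP i c.+1) => hic; first by apply: IH.
by have -> : i = c.+1 by lia.
Qed.
Lemma S_sum c (I : Type) (s : seq I) (P : pred I) (F : I -> {poly int}) :
  S c (\sum_(i <- s | P i) F i) = \sum_(i <- s | P i) S c (F i).
Proof. exact: (big_morph (S c) (S_add c) (S_zero c)). Qed.

Lemma S_Xn c k : (k <= c)%N -> S c 'X^k = ('X^2 + 1) ^+ k * 'X^(c - k).
Proof.
move=> hk; rewrite /S (bigD1 (Ordinal (hk : (k < c.+1)%N))) //= coefXn eqxx scale1r.
rewrite big1 ?addr0 // => i hi; rewrite coefXn.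
have -> : (i == k :> nat) = false.
  by apply/negbTE; apply: contra hi => /eqP e; apply/eqP/val_inj.
by rewrite scale0r.
Qed.

Lemma S_Xn0 c : S c 'X^(c.+1) = 0.
Proof.
rewrite /S big1 // => i _; rewrite coefXn.
have -> : (i == c.+1 :> nat) = false by have := ltn_ord i; lia.
by rewrite scale0r.
Qed.

Lemma poly_expand (p : {poly int}) n : (size p <= n)%N ->
  p = \sum_(i < n) p`_i *: 'X^i.
Proof.
move=> hs; rewrite -poly_def; apply/polyP => j; rewrite coef_poly.
by case: ltnP => // hj; rewrite (coef_big hs).
Qed.
Arguments poly_expand {p n}.

Lemma S_mul a b (r s : {poly int}) : (size r <= a.+1)%N -> (size s <= b.+1)%N ->
  S a r * S b s = S (a + b) (r * s).
Proof.
move=> hr hs.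
rewrite [in RHS](poly_expand hr) [in RHS](poly_expand hs) [in RHS]mulr_suml [in RHS]S_sum.
rewrite {1}/S mulr_suml; apply: eq_bigr => i _.
rewrite mulr_sumr mulr_sumr S_sum; apply: eq_bigr => j _.
rewrite -scalerAl -scalerAr scalerA -!scalerAl -!scalerAr scalerA -exprD.
rewrite S_scale S_Xn; last by have := ltn_ord i; have := ltn_ord j; lia.
congr (_ *: _).
rewrite mulrACA -!exprD; congr (_ * 'X^ _).
by have := ltn_ord i; have := ltn_ord j; lia.
Qed.

Lemma S_surj c (f : {poly int}) : pal c f -> exists r : {poly int}, (size r <= c.+1)%N /\ f = S c r.
Proof.
elim: c f => [|c IH] f [sf hf].
  exists (f`_0)%:P; split; first exact: size_polyC_leq1.
  by rewrite S_0 coefC /=; apply: size1_polyC.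
set a := f`_0.
set g := f - a *: ('X^2 + 1) ^+ c.+1.
have pg : pal c.+1 g by apply: pal_add => //; rewrite -scaleNr; apply/pal_scale/pal_Tn.
have g0 : g`_0 = 0 by rewrite coefB coefZ Tn_bot mulr1 subrr.
set h := \poly_(i < size g) g`_i.+1.
have gh : g = 'X * h.
  apply/polyP => j; rewrite coefXM coef_poly.
  case: j => [|j] //=; case: ltnP => // hj.
  by apply: (coef_big hj); lia.
have ph : pal c h.
  have [sg hg] := pg; split.
    apply/leq_sizeP => j hj.
    have -> : h`_j = g`_j.+1 by rewrite gh coefXM.
    case: (ltnP j.+1 (2 * c.+1)) => hj2.
      lia.
    case: (ltnP (2 * c.+1) j.+1) => hj3.
      by rewrite (coef_big sg).
    have -> : j.+1 = (2 * c.+1)%N by lia.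
    by rewrite -(hg 0%N) // g0.
  move=> i j e.
  have -> : h`_i = g`_i.+1 by rewrite gh coefXM.
  have -> : h`_j = g`_j.+1 by rewrite gh coefXM.
  by apply: hg; lia.
have [r' [sr' hr']] := IH h ph.
exists (r' + (a - r'`_c.+1) *: 'X^(c.+1)); split.
  apply: leq_trans (size_polyD _ _) _; rewrite geq_max; apply/andP; split.
    exact: leq_trans sr' _.
  by apply: leq_trans (size_scale_leq _ _) _; rewrite size_polyXn.
rewrite S_rec S_add S_scale S_Xn0 scaler0 addr0 -hr' -gh.
rewrite coefD coefZ coefXn eqxx mulr1 (coef_big sr') // add0r subr0.
by rewrite /g subrK.
Qed.
Lemma prod_bound (I : Type) (s : seq I) (P : pred I) (F : I -> algC) :
  (forall i, `|F i| = 1) ->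
  [/\ \prod_(i <- s | P i) ('X - (F i)%:P) \is monic,
      size (\prod_(i <- s | P i) ('X - (F i)%:P)) = (count P s).+1 &
      `|(\prod_(i <- s | P i) ('X - (F i)%:P))`_(count P s).-1| <= (maxn (count P s) 1)%:R].
Proof.
move=> hF; elim: s => [|i s [IH1 IH2 IH3]].
  by rewrite big_nil monic1 size_poly1 coef1 /= normr1.
rewrite big_cons /=; case: (P i) => /=; last by rewrite add0n.
move: IH1 IH2 IH3.
set Q := \prod_(j <- s | P j) _.
set m := count P s => IH1 IH2 IH3.
have Qm : Q`_m = 1 by move/monicP: IH1; rewrite lead_coefE IH2.
split.
- by rewrite monicMl // monicXsubC.
- by rewrite size_Mmonic ?IH2 ?size_XsubC // -size_poly_eq0 size_XsubC.
- rewrite add1n /= mulrBl coefB coefXM coefCM Qm mulr1.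
  apply: le_trans (ler_normB _ _) _; rewrite hF.
  clear IH2; case: m IH3 Qm => [|m] IH3 Qm /=.
    by rewrite normr0 add0r.
  move: IH3; rewrite /maxn /= => IH3.
  by rewrite -natr1 lerD2r.
Qed.
Lemma gt_size_coef (p : {poly int}) n : p`_n != 0 -> (n < size p)%N.
Proof. by move=> h; rewrite ltnNge; apply: contra h => H; apply/eqP; apply: nth_default. Qed.

Lemma symp_pal (f : {poly int}) : symplectic f ->
  exists a, [/\ size f = (2 * a).+1, pal a f & f`_0 = 1].
Proof.
move=> [hm hodd hp].
have fn0 : f != 0 by apply: monic_neq0.
have sf : (0 < size f)%N by rewrite size_poly_gt0.
have e := odd_double_half (size f).-1; rewrite (negbTE hodd) add0n -mul2n in e.
exists (size f).-1./2; split.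
- by rewrite e prednK.
- split; first by rewrite e prednK.
  move=> i j hij; rewrite hp; last lia.
  congr (_`_ _); lia.
- rewrite hp //; move/monicP: hm; by rewrite lead_coefE subn0.
Qed.

Theorem proposition3p4 (g : nat) (q : {poly int})
  (hmonic : q \is monic) (hsize : size q = g.+1)
  (hirr : irreducible_poly q)
  (hcoef : (2 * g)%:Z < `|q`_g.-1|) :
  homological_criterion (sym q).
Proof.
have g1 : (0 < g)%N by have := hirr.1; rewrite hsize.
have qg : q`_g = 1 by move/monicP: hmonic; rewrite lead_coefE hsize.
have Es : sym q = S g q by rewrite /sym hsize.
have [sE pE] := pal_S g q.
have Etop : (S g q)`_(2 * g) = 1 by rewrite S_top.
have Esize : size (S g q) = (2 * g).+1.
  apply/eqP; rewrite eqn_leq sE /=; apply: gt_size_coef; by rewrite Etop oner_neq0.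
have Emon : S g q \is monic by rewrite monicE lead_coefE Esize Etop.
have Esub : (S g q)`_(2 * g).-1 = q`_g.-1.
  case: g g1 {hcoef qg Es sE pE Etop Esize Emon hsize} => [|c] // _.
  rewrite S_rec coefD coefXM.
  have -> : ((2 * c.+1).-1 == 0)%N = false by lia.
  have -> : (2 * c.+1).-1.-1 = (2 * c)%N by lia.
  rewrite S_top coefZ /=.
  have [_ hT] := pal_Tn c.+1.
  rewrite (hT _ 1%N); last lia.
  by rewrite Tn_one mulr0 addr0.
have qne : q`_g.-1 != 0.
  by apply/eqP => h; move: hcoef; rewrite h normr0.
have symE : symplectic (S g q).
  split => //; first by rewrite Esize /= oddM.
  by move=> i hi; rewrite Esize /=; apply: pE; move: hi; rewrite Esize /=; lia.
rewrite Es; split.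
- split => // f h sf sh e.
  have [a [saf paf f0]] := symp_pal _ sf.
  have [b [sbh pbh h0]] := symp_pal _ sh.
  have [r [sr fr]] := S_surj _ _ paf.
  have [s [ss hs]] := S_surj _ _ pbh.
  have fn0 : f != 0 by rewrite -size_poly_eq0 saf.
  have hn0 : h != 0 by rewrite -size_poly_eq0 sbh.
  have gab : g = (a + b)%N.
    have := congr1 (fun p : {poly int} => size p) e; rewrite /=; rewrite Esize size_mul // saf sbh; lia.
  have e2 : S g (q - r * s) = 0.
    by rewrite S_add S_opp e fr hs S_mul // gab subrr.
  have qrs : q = r * s.
    apply/polyP => i; case: (leqP i g) => hi.
      by apply/eqP; rewrite -subr_eq0 -coefB; apply/eqP; apply: S_inj e2 _ hi.
    rewrite (coef_big (p := q) (n := g.+1)) ?hsize //.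
    rewrite (coef_big (p := r * s) (n := g.+1)) //.
    apply: leq_trans (size_polyMleq _ _) _; lia.
  have ra : r`_a = 1 by rewrite -S_bot -fr.
  case: a saf paf sr fr ra gab => [|a'] saf paf sr fr ra gab; first by left.
  right.
  have sra : size r = a'.+2.
    by apply/eqP; rewrite eqn_leq sr; apply: gt_size_coef; rewrite ra oner_neq0.
  have := hirr.2 r; rewrite sra => /(_ isT).
  rewrite qrs dvdp_mulIl => /(_ isT) /andP [_ hqr].
  have rn0 : r != 0 by rewrite -size_poly_eq0 sra.
  have := dvdp_leq rn0 hqr; rewrite -qrs hsize sra => hle.
  rewrite sbh; congr (_.+1); lia.
- move=> [n n0 e].
  have [z pz] := C_prim_root_exists n0.
  have hz : `|z| = 1.
    apply/eqP; rewrite -(pexpr_eq1 n0) ?normr_ge0 // -normrX.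
    by rewrite (UnityRootTheory.prim_expr_order pz) normr1.
  have := Cintr_Cyclotomic pz; rewrite -e /cyclotomic.
  have hF : forall k : 'I_n, `|z ^+ k| = 1 by move=> k; rewrite normrX hz expr1n.
  have [_ sQ bQ] := prod_bound _ (index_enum 'I_n) (fun k : 'I_n => coprime k n) (fun k : 'I_n => z ^+ k) hF.
  move=> eQ; rewrite -eQ in sQ bQ.
  rewrite size_map_inj_poly ?Esize in sQ; [|exact: intr_inj|exact: mulr0z].
  case: sQ bQ => <-; rewrite coef_map Esub /= -intr_norm.
  rewrite (maxn_idPl _); last lia.
  rewrite pmulrn ler_int => hb.
  by move: hcoef; rewrite ltNge hb.
- move=> k hk [r e].
  have k0 : (0 < k)%N by lia.
  have h1 := Etop; rewrite e coef_comp_poly_Xn // in h1.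
  have h2 := Esub; rewrite e coef_comp_poly_Xn // in h2.
  case: ifP h1 => [d1 _|_ /eqP]; last by rewrite eq_sym oner_eq0.
  case: ifP h2 => [d2 _|_ h2]; last by move: qne; rewrite -h2 eqxx.
  have := dvdn_sub d1 d2.
  have -> : (2 * g - (2 * g).-1 = 1)%N by lia.
  rewrite dvdn1 => /eqP k1; lia.
Qed.
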